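(* Let $k$ be a field of characteristic zero, let $q\in k\setminus\{0\}$, and let $f=a/b\in k(x,y)$ with $a,b\in k[x,y]$, $b\neq 0$. Let $d\in k[y]$ be an irreducible polynomial which divides $b$. Then: (i) $\operatorname{res}_{D_y}(\sigma_x(f),d)=\sigma_x(\operatorname{res}_{D_y}(f,d))$; (ii) $\operatorname{res}_{D_y}(\tau_{x,q}(f),d)=\tau_{x,q}(\operatorname{res}_{D_y}(f,d))$; (iii) $\operatorname{res}_{\sigma_y}(\tau_{x,q}(f),d,j)=\tau_{x,q}(\operatorname{res}_{\sigma_y}(f,d,j))$ for all $j\in\mathbb{N}$.
   Context: On $k(x,y)$ define the automorphisms $\sigma_x(f(x,y))=f(x+1,y)$, $\sigma_y(f(x,y))=f(x,y+1)$ and $\tau_{x,q}(f(x,y))=f(qx,y)$. Regard $k(x,y)=K(y)$ with $K=k(x)$. $D_y$-residue: every $f\in K(y)$ can be written uniquely as $f=p+\sum_{i=1}^n\sum_{j=1}^{m_i} a_{i,j}/d_i^j$ with $p,a_{i,j}\in K[y]$, $\deg_y(a_{i,j})<\deg_y(d_i)$, and the $d_i$ distinct monic irreducible polynomials in $K[y]$ (irreducible partial fraction decomposition); $\operatorname{res}_{D_y}(f,d_i):=a_{i,1}$ (and the residue at an irreducible $d$ not among the $d_i$ is $0$). $\sigma_y$-residue: two polynomials $p,p'$ are $\sigma_y$-equivalent if $p=\sigma_y^i(p')$ for some $i\in\mathbb{Z}$. Writing the irreducible partial fraction decomposition of $f$ with respect to $y$ over $K$ and grouping the terms whose denominators are powers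 of elements of the $\sigma_y$-orbit of the irreducible $d$, one gets uniquely $f=\sum_{j}\sum_{\ell} a_{j,\ell}/\sigma_y^{\ell}(d)^j+R$, where $a_{j,\ell}\in K[y]$, $\deg_y(a_{j,\ell})<\deg_y(d)$, and $R$ has no irreducible factor $\sigma_y$-equivalent to $d$ in its denominator. Then $\operatorname{res}_{\sigma_y}(f,d,j):=\sum_{\ell}\sigma_y^{-\ell}(a_{j,\ell})$, the $\sigma_y$-residue of $f$ at $d$ of multiplicity $j$. *)

(* Defs.v *)
From HB Require Import structures.
From mathcomp Require Import all_boot all_order all_algebra.
From Stdlib Require Import ClassicalEpsilon.
Set Implicit Arguments. Unset Strict Implicit. Unset Printing Implicit Defensive.
Import Order.TTheory GRing.Theory Num.Theory.
Local Open Scope ring_scope.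

Notation "x %:F" := (@FracField.tofrac _ x) : ring_scope.

(* K = k(x) and k(x,y) = K(y). Polynomials {poly {poly k}} are k[x,y],
   outer variable y, inner variable x. *)
Definition KK (k : fieldType) := {fraction {poly k}}.
Definition FF (k : fieldType) := {fraction {poly KK k}}.

Definition frac_map (R : idomainType) (g : R -> R) (u : {fraction R})
  : {fraction R} :=
  let r := repr u in (g (frac r).1)%:F / (g (frac r).2)%:F.

Definition sigx_K (k : fieldType) : KK k -> KK k :=
  frac_map (fun p : {poly k} => p \Po ('X + 1)).
Definition taux_K (k : fieldType) (q : k) : KK k -> KK k :=
  frac_map (fun p : {poly k} => p \Po (q *: 'X)).

Definition sigx_Ky (k : fieldType) (p : {poly KK k}) : {poly KK k} :=
  map_poly (@sigx_K k) p.
Definition taux_Ky (k : fieldType) (q : k) (p : {poly KK k}) : {poly KK k} :=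
  map_poly (taux_K q) p.

Definition sigx (k : fieldType) : FF k -> FF k := frac_map (@sigx_Ky k).
Definition taux (k : fieldType) (q : k) : FF k -> FF k := frac_map (taux_Ky q).

Definition sigy_pow (k : fieldType) (l : int) (p : {poly KK k}) : {poly KK k} :=
  p \Po ('X + (l%:~R)%:P).

Definition kxy_to_F (k : fieldType) (a : {poly {poly k}}) : FF k :=
  (map_poly (fun c : {poly k} => c%:F) a)%:F.
Definition ky_to_Ky (k : fieldType) (d : {poly k}) : {poly KK k} :=
  map_poly (fun c : k => (c%:P)%:F) d.
Definition ky_to_kxy (k : fieldType) (d : {poly k}) : {poly {poly k}} :=
  map_poly polyC d.

(* Irreducible partial fraction decomposition of f in K(y):
   f = p + \sum_{(d_i, [a_{i,1}; ...; a_{i,m_i}]) in D} \sum_j a_{i,j} / d_i^j,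
   with the d_i distinct monic irreducible and deg a_{i,j} < deg d_i. *)
Definition is_pfd (k : fieldType) (f : FF k) (p : {poly KK k})
    (D : seq ({poly KK k} * seq {poly KK k})) : Prop :=
  [/\ uniq (map fst D),
      (forall e, e \in D -> e.1 \is monic /\ irreducible_poly e.1),
      (forall e, e \in D -> forall a, a \in e.2 -> (size a < size e.1)%N) &
      f = p%:F + \sum_(e <- D) \sum_(j < size e.2)
                   (e.2`_j)%:F / (e.1 ^+ j.+1)%:F ].

(* a chosen decomposition (it exists, and the residues do not depend on the
   choice) *)
Definition pfd (k : fieldType) (f : FF k)
  : {poly KK k} * seq ({poly KK k} * seq {poly KK k}) :=
  epsilon (inhabits (0, [::])) (fun pD => is_pfd f pD.1 pD.2).

Definition monicize (k : fieldType) (d : {poly KK k}) : {poly KK k} :=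
  (lead_coef d)^-1 *: d.

(* D_y-residue of f at the irreducible d (taken up to normalization of d) *)
Definition res_Dy (k : fieldType) (f : FF k) (d : {poly KK k}) : {poly KK k} :=
  \sum_(e <- (pfd f).2 | e.1 == monicize d) e.2`_0.

(* sigma_y-residue of f at d of multiplicity j (j >= 1; defined as 0 for j = 0):
   sum over the denominators d_i = sigma_y^l (d) of sigma_y^{-l}(a_{i,j}) *)
Definition res_sigy (k : fieldType) (f : FF k) (d : {poly KK k}) (j : nat)
  : {poly KK k} :=
  if j == 0%N then 0 else
  \sum_(e <- (pfd f).2)
     let l := epsilon (inhabits 0%Z)
                (fun l : int => e.1 = sigy_pow l (monicize d)) in
     if e.1 == sigy_pow l (monicize d) then sigy_pow (- l) (e.2`_(j.-1)) else 0.

(* Main.v *)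
Require Import Defs.
From HB Require Import structures.
From mathcomp Require Import all_boot all_order all_algebra.
From Stdlib Require Import ClassicalEpsilon Classical FunctionalExtensionality PropExtensionality.
From mathcomp Require Import ring zify.
Set Implicit Arguments. Unset Strict Implicit. Unset Printing Implicit Defensive.
Import GRing.Theory.
Local Open Scope ring_scope.

Lemma frac_reprE (R : idomainType) (u : {fraction R}) :
  u = (\n_(repr u))%:F / (\d_(repr u))%:F.
Proof.
rewrite -{1}[u]reprK; set x := repr u.
have dn0 : (@FracField.tofrac R \d_x) != 0.
  by rewrite tofrac_eq0 denom_ratioP.
apply: (canRL (mulfK dn0)).
unlock FracField.tofrac.
have := FracField.pi_mul x (Ratio \d_x 1).
move=> E; apply: (etrans (esym E)).
apply/eqmodP => /=. rewrite FracField.equivfE /FracField.mulf /=.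
rewrite !numden_Ratio ?oner_neq0 ?mulf_neq0 ?denom_ratioP //=.
  by rewrite !mulr1 mulrC.
exact: oner_neq0. exact: oner_neq0.
Qed.

Lemma divB_common (F : fieldType) (a b c e : F) : b != 0 -> e != 0 ->
  a / b - c / e = (a * e - c * b) / (b * e).
Proof. by move=> b0 e0; field; rewrite b0 e0. Qed.

Section FM.
Variables (R : idomainType) (g : {rmorphism R -> R}).
Hypothesis ginj : injective g.

Lemma g_neq0 d : d != 0 -> g d != 0.
Proof. by rewrite -{2}(rmorph0 g) (inj_eq ginj). Qed.

Lemma fm_frac n d : d != 0 ->
  frac_map g (n%:F / d%:F) = (g n)%:F / (g d)%:F.
Proof.
move=> d0; rewrite /frac_map /=.
set u := n%:F / d%:F; have E := frac_reprE u.
set n' := \n_(repr u) in E *; set d' := \d_(repr u) in E *.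
have d'0 : d' != 0 := denom_ratioP _.
move: E; rewrite /u => /eqP; rewrite eqr_div ?tofrac_eq0 // -!rmorphM tofrac_eq.
move=> /eqP E.
apply/eqP; rewrite eqr_div ?tofrac_eq0 ?g_neq0 // -!tofracM tofrac_eq -!rmorphM.
by rewrite -E.
Qed.

Lemma fm_tofrac x : frac_map g x%:F = (g x)%:F.
Proof.
have := fm_frac x (oner_neq0 R); rewrite !rmorph1 !divr1 => ->; by [].
Qed.

Lemma fm_zmod : zmod_morphism (frac_map g).
Proof.
move=> u v; rewrite [u]frac_reprE [v]frac_reprE.
set n := \n_(repr u); set d := \d_(repr u).
set n' := \n_(repr v); set d' := \d_(repr v).
have d0 : d != 0 := denom_ratioP _.
have d'0 : d' != 0 := denom_ratioP _.
have dF : (d%:F : {fraction R}) != 0 by rewrite tofrac_eq0.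
have d'F : (d'%:F : {fraction R}) != 0 by rewrite tofrac_eq0.
have -> : n%:F / d%:F - n'%:F / d'%:F = (n * d' - n' * d)%:F / (d * d')%:F.
  by rewrite divB_common // rmorphB !rmorphM.
rewrite !fm_frac ?mulf_neq0 //.
have gdF : ((g d)%:F : {fraction R}) != 0 by rewrite tofrac_eq0 g_neq0.
have gd'F : ((g d')%:F : {fraction R}) != 0 by rewrite tofrac_eq0 g_neq0.
rewrite divB_common // !rmorphB !(rmorphM g). rewrite !rmorphM. reflexivity.
Qed.

Lemma fm_monoid : monoid_morphism (frac_map g).
Proof.
split; first by have := fm_tofrac 1; rewrite !rmorph1.
move=> u v; rewrite [u]frac_reprE [v]frac_reprE.
set n := \n_(repr u); set d := \d_(repr u).
set n' := \n_(repr v); set d' := \d_(repr v).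
have d0 : d != 0 := denom_ratioP _.
have d'0 : d' != 0 := denom_ratioP _.
have -> : n%:F / d%:F * (n'%:F / d'%:F) = (n * n')%:F / (d * d')%:F.
  by rewrite !rmorphM /= mulrACA invfM.
rewrite !fm_frac ?mulf_neq0 // !(rmorphM g) !rmorphM.
by rewrite mulrACA invfM.
Qed.

Definition fmR : {rmorphism {fraction R} -> {fraction R}} :=
  HB.pack (frac_map g) (GRing.isZmodMorphism.Build _ _ _ fm_zmod)
    (GRing.isMonoidMorphism.Build _ _ _ fm_monoid).

Lemma fmRE : fmR =1 frac_map g. Proof. by []. Qed.

End FM.

Lemma fm_cancel (R : idomainType) (g g' : {rmorphism R -> R}) :
  injective g -> injective g' -> cancel g g' ->
  cancel (frac_map g) (frac_map g').
Proof.
move=> gi g'i c u; rewrite [u]frac_reprE.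
have d0 : \d_(repr u) != 0 := denom_ratioP _.
by rewrite fm_frac // fm_frac ?g_neq0 // !c.
Qed.

Lemma divD_common (K : fieldType) (x a y b : K) : a != 0 -> b != 0 ->
  x / a + y / b = (x * b + y * a) / (a * b).
Proof. by move=> a0 b0; field; rewrite a0 b0. Qed.

Lemma clear_den (K : fieldType) (x y z a b : K) : a != 0 -> b != 0 ->
  (x + (y / a + z / b)) * (a * b) = x * a * b + y * b + z * a.
Proof. by move=> a0 b0; field; rewrite a0 b0. Qed.

Section Uniq.
Variable F : fieldType.
Local Notation P := {poly F}.
Local Notation FR := {fraction {poly F}}.

Definition PS (L : seq (P * seq P)) : FR :=
  \sum_(e <- L) \sum_(j < size e.2) (e.2`_j)%:F / (e.1 ^+ j.+1)%:F.
Definition coef (L : seq (P * seq P)) (u : P) (j : nat) : P :=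
  \sum_(e <- L | e.1 == u) e.2`_j.
Definition okL (L : seq (P * seq P)) :=
  forall e, e \in L -> [/\ e.1 \is monic, irreducible_poly e.1 &
                         forall a, a \in e.2 -> (size a < size e.1)%N].

Lemma sum_pow_common (u : P) (C : nat -> P) n : u != 0 ->
  \sum_(i < n) (C i)%:F / (u ^+ i.+1)%:F =
  (\sum_(i < n) C i * u ^+ (n - i.+1))%:F / (u ^+ n)%:F :> FR.
Proof.
move=> u0; rewrite rmorph_sum mulr_suml; apply: eq_bigr => i _.
have un0 : forall m, (u ^+ m)%:F != 0 :> FR by move=> m; rewrite tofrac_eq0 expf_neq0.
have -> : u ^+ n = u ^+ i.+1 * u ^+ (n - i.+1) by rewrite -exprD subnKC.
rewrite !rmorphM /= invfM mulrACA mulfV ?mulr1 //; exact: un0.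
Qed.

Lemma dadic (u : P) n (C : nat -> P) : u != 0 ->
  (forall i, (size (C i) < size u)%N) ->
  u ^+ n %| \sum_(i < n) C i * u ^+ (n - i.+1) -> forall i, (i < n)%N -> C i = 0.
Proof.
move=> u0 hs; elim: n => [//|n IH].
rewrite big_ord_recr /= subnn expr0 mulr1.
have -> : \sum_(i < n) C i * u ^+ (n.+1 - i.+1) =
          (\sum_(i < n) C i * u ^+ (n - i.+1)) * u.
  rewrite mulr_suml; apply: eq_bigr => i _.
  by rewrite -mulrA -exprSr subSS subnSK.
set S := \sum_(i < n) _ => hd.
have hCn : C n = 0.
  have : u %| S * u + C n by apply: dvdp_trans hd; rewrite exprS dvdp_mulr.
  rewrite dvdp_addr ?dvdp_mull // => hu.
  apply/eqP; apply: contraT => cn0.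
  by have := dvdp_leq cn0 hu; rewrite leqNgt hs.
move: hd; rewrite hCn addr0 exprSr dvdp_mul2r // => /IH h i.
rewrite ltnS leq_eqVlt => /orP [/eqP -> //|]; exact: h.
Qed.

Lemma common_den (I : eqType) (r : seq I) (Pr : pred I) (G : I -> FR)
    (den : I -> P) :
  (forall i, i \in r -> Pr i -> den i != 0) ->
  (forall i, i \in r -> Pr i -> exists n, G i = n%:F / (den i)%:F) ->
  exists R, \sum_(i <- r | Pr i) G i = R%:F / (\prod_(i <- r | Pr i) den i)%:F.
Proof.
elim: r => [|i r IH] hd hG.
  by exists 0; rewrite !big_nil rmorph0 mul0r.
have sub : forall j, j \in r -> j \in i :: r by move=> j jr; rewrite in_cons jr orbT.
have [R {}IH] := IH (fun j jr => hd j (sub j jr)) (fun j jr => hG j (sub j jr)).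
rewrite !big_cons; case Pi: (Pr i); last by exists R.
have [n ->] := hG i (mem_head _ _) Pi; rewrite IH.
exists (n * \prod_(j <- r | Pr j) den j + R * den i).
have h1 : (den i)%:F != 0 :> FR by rewrite tofrac_eq0 hd ?mem_head.
have h2 : (\prod_(j <- r | Pr j) den j)%:F != 0 :> FR.
  rewrite tofrac_eq0 big_seq_cond; apply: (big_ind (fun x => x != 0)) => [|x y|j /andP [jr Pj]].
  - exact: oner_neq0.
  - exact: mulf_neq0.
  - exact: hd j (sub j jr) Pj.
rewrite (divD_common _ _ h1 h2).
rewrite rmorphD !rmorphM; reflexivity.
Qed.

Lemma coef_small L (u : P) i : okL L -> (0 < size u)%N -> (size (coef L u i) < size u)%N.
Proof.
move=> ok u1.
rewrite /coef big_seq_cond; apply: (big_ind (fun x : P => size x < size u)%N).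
- by rewrite size_poly0.
- move=> x y hx hy; apply: leq_ltn_trans (size_polyD x y) _.
  by rewrite gtn_max hx hy.
- move=> e /andP [eL /eqP eu]; have [_ _ es] := ok e eL.
  case: (ltnP i (size e.2)) => hi.
    by rewrite -eu; apply: es; rewrite mem_nth.
  by rewrite nth_default // size_poly0.
Qed.

Lemma coprime_irr (u v : P) : u \is monic -> irreducible_poly u ->
  v \is monic -> irreducible_poly v -> u != v -> coprimep u v.
Proof.
move=> um ui vm vi uv; rewrite irreducible_poly_coprime //; apply/negP => udv.
have : u %= v by apply: vi => //; rewrite neq_ltn ui.1 orbT.
by rewrite eqp_monic // (negbTE uv).
Qed.

Lemma uniqPS L p : okL L -> p%:F + PS L = 0 -> forall u j, coef L u j = 0.
Proof.
move=> ok h0 u j.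
have [hu|hnu] := boolP (has (fun e => e.1 == u) L); last by rewrite /coef big_hasC.
case/hasP: hu => e0 e0L /eqP e0u.
have [um uirr _] := ok e0 e0L; rewrite e0u in um uirr.
have u0 : u != 0 := irredp_neq0 uirr.
set N := \sum_(e <- L) size e.2.
have hN : forall e, e \in L -> (size e.2 <= N)%N.
  by move=> e eL; rewrite /N (big_rem e eL) /=; exact: leq_addr.
set C := fun i => coef L u i.
have Cs : forall i, (size (C i) < size u)%N by move=> i; apply: coef_small => //; apply: leq_trans _ uirr.1.
have G : \sum_(e <- L | e.1 == u) \sum_(i < size e.2) (e.2`_i)%:F / (e.1 ^+ i.+1)%:F
        = \sum_(i < N) (C i)%:F / (u ^+ i.+1)%:F :> FR.
  rewrite big_seq_cond.
  rewrite (eq_bigr (fun e => \sum_(i < N) (e.2`_i)%:F / (u ^+ i.+1)%:F)); last first.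
    move=> e /andP [eL /eqP eu]; rewrite eu (big_ord_widen _ (fun i : nat => (e.2`_i)%:F / (u ^+ i.+1)%:F : FR) (hN e eL)) big_mkcond /=.
    apply: eq_bigr => i _.
    case: ltnP => // hi; rewrite nth_default // rmorph0 mul0r; reflexivity.
  rewrite exchange_big /=; apply: eq_bigr => i _.
  rewrite /C /coef rmorph_sum mulr_suml [RHS]big_seq_cond; reflexivity.
have [R hR] : exists R, \sum_(e <- L | e.1 != u)
      \sum_(i < size e.2) (e.2`_i)%:F / (e.1 ^+ i.+1)%:F
    = R%:F / (\prod_(e <- L | e.1 != u) e.1 ^+ size e.2)%:F :> FR.
  apply: common_den.
    move=> e eL _; have [_ ei _] := ok e eL; exact: expf_neq0 (irredp_neq0 ei).
  move=> e eL _; have [_ ei _] := ok e eL.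
  by eexists; apply: sum_pow_common (irredp_neq0 ei).
set Q := \prod_(e <- L | e.1 != u) e.1 ^+ size e.2 in hR.
have Q0 : Q != 0.
  rewrite /Q big_seq_cond; apply: (big_ind (fun x => x != 0)) => [|x y|e /andP [eL _]].
  - exact: oner_neq0.
  - exact: mulf_neq0.
  - have [_ ei _] := ok e eL; exact: expf_neq0 (irredp_neq0 ei).
have cQ : coprimep u Q.
  rewrite /Q big_seq_cond; apply: (big_ind (coprimep u)) => [|x y|e /andP [eL neu]].
  - exact: coprimep1.
  - by rewrite coprimepMr => -> ->.
  - apply: coprimep_expr; have [em ei _] := ok e eL.
    by apply: coprime_irr => //; rewrite eq_sym.
set A := \sum_(i < N) C i * u ^+ (N - i.+1).
have hsplit : PS L = A%:F / (u ^+ N)%:F + R%:F / Q%:F.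
  rewrite /PS (bigID (fun e => e.1 == u)) /= G hR sum_pow_common //.
have h1 : (p * u ^+ N * Q + A * Q + R * u ^+ N)%:F = 0 :> FR.
  have uN : (u ^+ N)%:F != 0 :> FR by rewrite tofrac_eq0 expf_neq0.
  have QF : Q%:F != 0 :> FR by rewrite tofrac_eq0.
  have := clear_den p%:F A%:F R%:F uN QF.
  rewrite -hsplit h0 mul0r => /esym; rewrite !rmorphD !rmorphM => hh.
  exact: hh.
move/eqP: h1; rewrite tofrac_eq0 => /eqP h1.
have hdiv : u ^+ N %| A * Q.
  have -> : A * Q = (- (p * Q + R)) * u ^+ N.
    by rewrite -[A * Q]subr0 -h1; ring.
  exact: dvdp_mull (dvdpp _).
have hdA : u ^+ N %| A by rewrite -(Gauss_dvdpl _ (coprimep_expl N cQ)).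
have hC := dadic u0 Cs hdA.
rewrite -/(C j); case: (ltnP j N) => hj; first exact: hC.
rewrite /C /coef big1_seq // => e /andP [_ eL]; rewrite nth_default //.
exact: leq_trans (hN e eL) hj.
Qed.

End Uniq.

Lemma partition_seq (I J : eqType) (V : zmodType) (r : seq I) (U : seq J)
    (key : I -> J) (G : I -> V) :
  uniq U -> (forall i, i \in r -> key i \in U) ->
  \sum_(i <- r) G i = \sum_(u <- U) \sum_(i <- r | key i == u) G i.
Proof.
move=> uU hk.
rewrite (eq_bigr (fun u => \sum_(i <- r) (if key i == u then G i else 0)));
  last by move=> u _; rewrite big_mkcond.
rewrite [RHS]exchange_big /=; apply: eq_big_seq => i ir.
rewrite -big_mkcond (big_rem (key i) (hk i ir)) eqxx /= big1_seq.
  by rewrite addr0.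
by move=> u /andP [/eqP <-]; rewrite mem_rem_uniqF.
Qed.

Lemma mem_ncons (T : eqType) (a x : T) k s : a \in ncons k x s -> a = x \/ a \in s.
Proof.
elim: k => [|k IH] /=; first by right.
by rewrite in_cons => /orP [/eqP ->|/IH]; [left|].
Qed.

Lemma divDM_common (K : fieldType) (a b c e : K) : e != 0 -> b != 0 ->
  (a * b + c) / (e * b) = a / e + c / (e * b).
Proof. by move=> e0 b0; field; rewrite e0 b0. Qed.

Section Exist.
Variable F : fieldType.
Local Notation P := {poly F}.
Local Notation FR := {fraction {poly F}}.

Lemma group_u (L : seq (P * seq P)) (u : P) N :
  (forall e, e \in L -> e.1 == u -> (size e.2 <= N)%N) ->
  \sum_(e <- L | e.1 == u) \sum_(i < size e.2) (e.2`_i)%:F / (e.1 ^+ i.+1)%:F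
  = \sum_(i < N) (coef L u i)%:F / (u ^+ i.+1)%:F :> FR.
Proof.
move=> hN; rewrite big_seq_cond.
rewrite (eq_bigr (fun e => \sum_(i < N) (e.2`_i)%:F / (u ^+ i.+1)%:F)); last first.
  move=> e /andP [eL eu]; move: (hN e eL eu); move/eqP: eu => eu hNe.
  rewrite eu (big_ord_widen _ (fun i : nat => (e.2`_i)%:F / (u ^+ i.+1)%:F : FR) hNe) big_mkcond /=.
  apply: eq_bigr => i _.
  case: ltnP => // hi; rewrite nth_default // rmorph0 mul0r; reflexivity.
rewrite exchange_big /=; apply: eq_bigr => i _.
rewrite /coef rmorph_sum mulr_suml [RHS]big_seq_cond; reflexivity.
Qed.

Definition loose (x : FR) := exists p L, okL L /\ x = p%:F + PS L.

Lemma loose_add x y : loose x -> loose y -> loose (x + y).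
Proof.
move=> [p [L [oL ->]]] [p' [L' [oL' ->]]]; exists (p + p'), (L ++ L'); split.
  by move=> e; rewrite mem_cat => /orP [/oL|/oL'].
rewrite /PS big_cat rmorphD /= -!addrA; congr (_ + _); rewrite addrC -addrA; congr (_ + _).
by rewrite addrC.
Qed.

Lemma loose_single (g : P) k : g \is monic -> irreducible_poly g ->
  forall w, loose (w%:F / (g ^+ k)%:F).
Proof.
move=> gm gi; have g0 := irredp_neq0 gi.
elim: k => [|k IH] w.
  exists w, [::]; split; first by move=> e.
  by rewrite /PS big_nil addr0 expr0 rmorph1 divr1.
have [p [L [oL E]]] := IH (w %/ g).
exists p, ((g, ncons k 0 [:: w %% g]) :: L); split.
  move=> e; rewrite in_cons => /orP [/eqP -> /=|/oL //]; split => // a /mem_ncons [->|].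
    by rewrite size_poly0; apply: leq_trans _ gi.1.
  by rewrite inE => /eqP ->; rewrite ltn_modpN0.
have gF : g%:F != 0 :> FR by rewrite tofrac_eq0.
have gkF : (g ^+ k)%:F != 0 :> FR by rewrite tofrac_eq0 expf_neq0.
have -> : w%:F / (g ^+ k.+1)%:F = (w %/ g)%:F / (g ^+ k)%:F + (w %% g)%:F / (g ^+ k.+1)%:F :> FR.
  rewrite {1}(divp_eq w g) exprSr rmorphD !rmorphM.
  rewrite (divDM_common _ _ gkF gF); reflexivity.
rewrite E /PS big_cons /= size_ncons /= addn1 big_ord_recr /=.
rewrite [X in _ = _ + (X + _ + _)]big1; last first.
  move=> i _; rewrite nth_ncons ltn_ord rmorph0 mul0r; reflexivity.
rewrite add0r nth_ncons ltnn subnn /= -addrA [X in _ + X]addrC; reflexivity.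
Qed.

Lemma irr_factor (m : P) : (1 < size m)%N ->
  exists g, [/\ g \is monic, irreducible_poly g & g %| m].
Proof.
move: {2}(size m) (leqnn (size m)) => n; elim: n m => [|n IH] m hn hm.
  by move: (leq_trans hm hn).
have m0 : m != 0 by rewrite -size_poly_gt0; apply: ltnW.
case: (classic (irreducible_poly m)) => hirr.
  have lc0 : lead_coef m != 0 by rewrite lead_coef_eq0.
  have em : (lead_coef m)^-1 *: m %= m by apply: eqp_scale; rewrite invr_eq0.
  exists ((lead_coef m)^-1 *: m); split.
  - by rewrite monicE lead_coefZ mulVf.
  - split; first by rewrite size_scale ?invr_eq0.
    move=> q q1 qd; rewrite (eqp_dvdr _ em) in qd.
    by apply: eqp_trans (hirr q q1 qd) _; rewrite eqp_sym.
  - by rewrite (eqp_dvdl _ em) dvdpp.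
have [q [q1 qm nq]] : exists q : P, [/\ size q != 1, q %| m & ~~ (q %= m)].
  apply: NNPP => H; apply: hirr; split => // q q1 qm.
  by apply/negPn/negP => nq; apply: H; exists q.
have q0 : q != 0 by apply: contraNneq m0 => q0; move: qm; rewrite q0 dvd0p.
have hq : (size q < size m)%N.
  by rewrite ltn_neqAle dvdp_leq // andbT; apply: contra nq => /eqP h; rewrite -dvdp_size_eqp // h.
have q2 : (1 < size q)%N.
  by move: q1; rewrite ltn_neqAle eq_sym => -> /=; rewrite size_poly_gt0.
have [g [gm gi gq]] := IH q (ltnSE (leq_trans hq hn)) q2.
  exists g; split => //; exact: dvdp_trans gq qm.
Qed.

Lemma split_pow (g m : P) : irreducible_poly g -> m != 0 ->
  exists k m', m = g ^+ k * m' /\ ~~ (g %| m').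
Proof.
move=> gi; have g0 := irredp_neq0 gi.
move: {2}(size m) (leqnn (size m)) => n; elim: n m => [|n IH] m hn m0.
  by move: hn; rewrite leqn0 size_poly_eq0 (negbTE m0).
have [gm|ngm] := boolP (g %| m); last by exists 0%N, m; rewrite expr0 mul1r.
have E := divpK gm.
have q0 : m %/ g != 0 by apply: contraNneq m0 => q0; rewrite -E q0 mul0r.
have hs : (size (m %/ g)%R <= n)%N.
  rewrite size_divp //; have g1 := gi.1; have sm : (0 < size m)%N by rewrite size_poly_gt0.
  rewrite -subn1; move: g1 sm hn; set a := size g; set b := size m; lia.
have [k [m' [Eq nd]]] := IH _ hs q0.
by exists k.+1, m'; split => //; rewrite -E Eq exprS; ring.
Qed.

Lemma div_bezout (K : fieldType) (n x y a b : K) : a != 0 -> b != 0 ->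
  (n * (x * a + y * b)) / (a * b) = (n * x) / b + (n * y) / a.
Proof. by move=> a0 b0; field; rewrite a0 b0. Qed.

Lemma loose_all (m : P) : m != 0 -> forall n, loose (n%:F / m%:F).
Proof.
move: {2}(size m) (leqnn (size m)) => N; elim: N m => [|N IH] m hN m0 n.
  by move: hN; rewrite leqn0 size_poly_eq0 (negbTE m0).
have [/size_poly1P [c c0 ->]|m1] := boolP (size m == 1%N).
  exists (n * (c^-1)%:P), [::]; split; first by move=> e.
  rewrite /PS big_nil addr0.
  have cF : (c%:P)%:F != 0 :> FR by rewrite tofrac_eq0 polyC_eq0.
  apply: (mulIf cF); rewrite mulfVK // rmorphM -mulrA -rmorphM -polyCM mulVf // polyC1 rmorph1 mulr1.
  reflexivity.
have m2 : (1 < size m)%N.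
  by rewrite ltn_neqAle eq_sym m1 /= size_poly_gt0.
have [g [gm gi gdm]] := irr_factor m2.
have g0 := irredp_neq0 gi.
have [k [m' [Em ngm]]] := split_pow gi m0.
have m'0 : m' != 0 by apply: contraNneq m0 => m'0; rewrite Em m'0 mulr0.
have k0 : k != 0%N by apply: contraNneq ngm => k0; move: gdm; rewrite Em k0 expr0 mul1r.
have hs : (size m' < size m)%N.
  have le : (size m' <= size m)%N by apply: dvdp_leq => //; rewrite Em dvdp_mulIr.
  rewrite ltn_neqAle le andbT.
  apply/negP => /eqP h; move/negP: ngm; apply.
  have e : m' %= m by rewrite -dvdp_size_eqp ?h // Em dvdp_mulIr.
  by rewrite (eqp_dvdr _ e) gdm.
have cop : coprimep (g ^+ k) m'.
  by apply: coprimep_expl; rewrite irreducible_poly_coprime.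
have [[x y] /= hxy] := Bezout_eq1_coprimepP _ _ cop.
have aF : (g ^+ k)%:F != 0 :> FR by rewrite tofrac_eq0 expf_neq0.
have bF : m'%:F != 0 :> FR by rewrite tofrac_eq0.
have -> : n%:F / m%:F = (n * x)%:F / m'%:F + (n * y)%:F / (g ^+ k)%:F :> FR.
  rewrite Em -[n%:F]mulr1 -tofrac1 -hxy !rmorphM rmorphD !rmorphM.
  rewrite (div_bezout _ _ _ aF bF); reflexivity.
apply: loose_add; first exact: IH (ltnSE (leq_trans hs hN)) m'0 _.
exact: loose_single.
Qed.

Lemma normalize (p : P) (L : seq (P * seq P)) : okL L -> exists D, [/\ uniq (map fst D), okL D &
  p%:F + PS D = p%:F + PS L].
Proof.
move=> oL; set N := \sum_(e <- L) size e.2.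
set U := undup (map fst L).
have hN : forall e, e \in L -> (size e.2 <= N)%N.
  by move=> e eL; rewrite /N (big_rem e eL) /=; exact: leq_addr.
exists [seq (u, mkseq (coef L u) N) | u <- U]; split.
- by rewrite -map_comp map_id_in ?undup_uniq.
- move=> e /mapP [u uU ->] /=.
  move: uU; rewrite mem_undup => /mapP [e0 e0L ->].
  have [e0m e0i _] := oL e0 e0L; split => // a /mapP [j _ ->].
  by apply: coef_small => //; apply: leq_trans _ e0i.1.
- congr (_ + _); rewrite /PS big_map.
  rewrite (partition_seq (U := U) (key := fst) _ (undup_uniq _)); last first.
    by move=> e eL; rewrite mem_undup; apply: map_f.
  apply: eq_bigr => u _ /=.
  rewrite (group_u (N := N)); last by move=> e eL _; exact: hN.
  rewrite size_mkseq; apply: eq_bigr => i _; rewrite nth_mkseq //.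
Qed.

Lemma pfd_exists (f : FR) : exists p D,
  [/\ uniq (map fst D), okL D & f = p%:F + PS D].
Proof.
rewrite [f]frac_reprE.
have [p [L [oL ->]]] := loose_all (denom_ratioP (repr f)) \n_(repr f).
have [D [uD oD E]] := normalize p oL.
by exists p, D; split => //; rewrite E.
Qed.

End Exist.

Lemma fmR_tofrac (R : idomainType) (g : {rmorphism R -> R}) (gi : injective g) x :
  fmR gi x%:F = (g x)%:F.
Proof. exact: fm_tofrac. Qed.

Section Main.
Variable k : fieldType.
Local Notation F := (KK k).
Local Notation P := {poly KK k}.

Lemma pfd_spec (f : FF k) : is_pfd f (pfd f).1 (pfd f).2.
Proof.
rewrite /pfd; apply: (epsilon_spec _ (fun pD : P * seq (P * seq P) => is_pfd f pD.1 pD.2)).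
have [p [D [uD oD E]]] := pfd_exists f.
exists (p, D); split => //=.
- by move=> e eD; have [] := oD e eD.
- by move=> e eD; have [] := oD e eD.
Qed.

Lemma okL_pfd (f : FF k) p D : is_pfd f p D -> okL D.
Proof. by case=> _ h1 h2 _ e eD; have [] := h1 e eD; split => //; exact: h2. Qed.

Definition negD (D : seq (P * seq P)) := [seq (e.1, map -%R e.2) | e <- D].

Lemma nth_neg (s : seq P) j : (map -%R s)`_j = - s`_j.
Proof.
case: (ltnP j (size s)) => h; first by rewrite (nth_map 0).
by rewrite !nth_default ?size_map // oppr0.
Qed.

Lemma PS_neg D : PS (negD D) = - PS D.
Proof.
rewrite /PS big_map -sumrN; apply: eq_bigr => e _ /=.
rewrite -sumrN size_map; apply: eq_bigr => j _.
rewrite nth_neg rmorphN mulNr; reflexivity.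
Qed.

Lemma coef_neg D u j : coef (negD D) u j = - coef D u j.
Proof.
rewrite /coef big_map -sumrN; apply: eq_bigr => e _ /=; exact: nth_neg.
Qed.

Lemma okL_neg D : okL D -> okL (negD D).
Proof.
move=> oD e /mapP [e0 e0D ->] /=; have [m i s] := oD e0 e0D; split => //.
by move=> a /mapP [c cs ->]; rewrite size_polyN; exact: s.
Qed.

Lemma pfd_coef (f : FF k) p D : is_pfd f p D -> forall u j, coef (pfd f).2 u j = coef D u j.
Proof.
move=> hD u j.
have h1 := pfd_spec f.
have oL : okL ((pfd f).2 ++ negD D).
  move=> e; rewrite mem_cat => /orP [eL|eL].
    exact: (okL_pfd h1 eL).
  exact: (okL_neg (okL_pfd hD) eL).
have E1 : f = ((pfd f).1)%:F + PS (pfd f).2 by case: h1.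
have E2 : f = p%:F + PS D by case: hD.
have h0 : ((pfd f).1 - p)%:F + PS ((pfd f).2 ++ negD D) = 0.
  rewrite /PS big_cat /= -/(PS _) -/(PS (negD D)) PS_neg rmorphB /=.
  rewrite addrACA -opprD -E1 -E2 subrr; reflexivity.
have := uniqPS oL h0 u j.
rewrite /coef big_cat /= -/(coef _ u j) -/(coef (negD D) u j) coef_neg.
by move/eqP; rewrite subr_eq0 => /eqP.
Qed.

Lemma sum_via_coef (h : P -> P -> P) i (D : seq (P * seq P)) (U : seq P) :
  (forall u, h u 0 = 0) -> (forall u a b, h u (a + b) = h u a + h u b) ->
  uniq U -> (forall e, e \in D -> e.1 \in U) ->
  \sum_(e <- D) h e.1 (e.2`_i) = \sum_(u <- U) h u (coef D u i).
Proof.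
move=> h0 hD uU hU.
rewrite (partition_seq (U := U) (key := fst) _ uU hU); apply: eq_bigr => u _.
rewrite /coef (big_morph (h u) (hD u) (h0 u)); apply: eq_bigr => e /eqP -> //.
Qed.

Lemma sum_coef_eq (h : P -> P -> P) i (D1 D2 : seq (P * seq P)) :
  (forall u, h u 0 = 0) -> (forall u a b, h u (a + b) = h u a + h u b) ->
  (forall u, coef D1 u i = coef D2 u i) ->
  \sum_(e <- D1) h e.1 (e.2`_i) = \sum_(e <- D2) h e.1 (e.2`_i).
Proof.
move=> h0 hD hc; set U := undup (map fst (D1 ++ D2)).
rewrite (@sum_via_coef h i D1 U) // ?undup_uniq //; last first.
  move=> e eD; rewrite mem_undup map_cat mem_cat; apply/orP; left; exact: map_f.
rewrite (@sum_via_coef h i D2 U) // ?undup_uniq //; last first.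
  move=> e eD; rewrite mem_undup map_cat mem_cat; apply/orP; right; exact: map_f.
by apply: eq_bigr => u _; rewrite hc.
Qed.

Section Transport.
Variables (psi psi' : {rmorphism F -> F}).
Hypotheses (c1 : cancel psi psi') (c2 : cancel psi' psi).
Hypothesis hfix : forall c : k, psi ((c%:P)%:F) = (c%:P)%:F.

Let mp : {rmorphism P -> P} := map_poly psi.
Lemma mp_inj : injective (map_poly psi). Proof. exact: map_poly_inj. Qed.
Local Notation Phi := (frac_map (map_poly psi)).

Definition mapD (D : seq (P * seq P)) :=
  [seq (map_poly psi e.1, map (map_poly psi) e.2) | e <- D].

Lemma irr_map (p : P) : irreducible_poly p -> irreducible_poly (map_poly psi p).
Proof.
move=> [p1 hp]; split; first by rewrite size_map_poly.
move=> q q1 qd.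
have qq : map_poly psi (map_poly psi' q) = q.
  rewrite -map_poly_comp map_poly_id // => x _ /=; exact: c2.
rewrite -qq in qd *; rewrite dvdp_map in qd.
rewrite eqp_map; apply: hp qd; by rewrite size_map_poly.
Qed.

Lemma transport (f : FF k) p D : is_pfd f p D ->
  is_pfd (Phi f) (map_poly psi p) (mapD D).
Proof.
case=> uD hD sD E; split.
- have -> : map fst (mapD D) = map (map_poly psi) (map fst D).
    by rewrite /mapD -!map_comp.
  by rewrite map_inj_uniq //; exact: mp_inj.
- move=> e /mapP [e0 e0D ->] /=; have [m i] := hD e0 e0D.
  by rewrite map_monic; split => //; exact: irr_map.
- move=> e /mapP [e0 e0D ->] a /= /mapP [c cs ->].
  by rewrite !size_map_poly; exact: sD.
- rewrite E; change (fmR mp_inj (p%:F + PS D) = (map_poly psi p)%:F + PS (mapD D)).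
  rewrite /PS rmorphD rmorph_sum big_map; congr (_ + _); first exact: (@fm_tofrac _ mp mp_inj p).
  apply: (eq_bigr _ (fun e _ => _)) => e _.
  rewrite rmorph_sum size_map; apply: (eq_bigr _ (fun j _ => _)) => j _.
  rewrite fmorph_div !fmR_tofrac rmorphXn (nth_map 0) //.
Qed.

Lemma nth_mapP (s : seq P) j : (map (map_poly psi) s)`_j = map_poly psi (s`_j).
Proof.
case: (ltnP j (size s)) => h; first by rewrite (nth_map 0).
by rewrite !nth_default ?size_map // rmorph0.
Qed.

Lemma res_transport (h : P -> P -> P) i (f : FF k) :
  (forall u, h u 0 = 0) -> (forall u a b, h u (a + b) = h u a + h u b) ->
  (forall u c, h (map_poly psi u) (map_poly psi c) = map_poly psi (h u c)) ->
  \sum_(e <- (pfd (Phi f)).2) h e.1 (e.2`_i) =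
  map_poly psi (\sum_(e <- (pfd f).2) h e.1 (e.2`_i)).
Proof.
move=> h0 hD hc.
have tv := transport (pfd_spec f).
rewrite (@sum_coef_eq h i _ (mapD (pfd f).2)) //; last first.
  by move=> u; exact: pfd_coef tv u i.
rewrite /mapD big_map rmorph_sum; apply: eq_bigr => e _ /=.
by rewrite nth_mapP hc.
Qed.

End Transport.
End Main.

Section Final.
Variable k : fieldType.
Local Notation F := (KK k).
Local Notation P := {poly KK k}.
Variables (psi psi' : {rmorphism F -> F}).
Hypotheses (c1 : cancel psi psi') (c2 : cancel psi' psi).
Hypothesis hfix : forall c : k, psi ((c%:P)%:F) = (c%:P)%:F.

Lemma mpi : injective (map_poly psi). Proof. exact: map_poly_inj. Qed.

Lemma dK_fix (d : {poly k}) : map_poly psi (ky_to_Ky d) = ky_to_Ky d.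
Proof.
rewrite /ky_to_Ky -map_poly_comp; apply: eq_map_poly => c /=; exact: hfix.
Qed.

Lemma md_fix (d : {poly k}) :
  map_poly psi (monicize (ky_to_Ky d)) = monicize (ky_to_Ky d).
Proof.
by rewrite /monicize map_polyZ fmorphV -lead_coef_map dK_fix.
Qed.

Lemma map_sigy l (c : P) : map_poly psi (sigy_pow l c) = sigy_pow l (map_poly psi c).
Proof. by rewrite /sigy_pow map_comp_poly map_polyXaddC rmorph_int. Qed.

Lemma res_Dy_tr (f : FF k) (d : {poly k}) :
  res_Dy (frac_map (map_poly psi) f) (ky_to_Ky d) =
  map_poly psi (res_Dy f (ky_to_Ky d)).
Proof.
rewrite /res_Dy big_mkcond [in RHS]big_mkcond.
set md := monicize (ky_to_Ky d).
have := @res_transport k psi psi' c2 (fun u c => if u == md then c else 0) 0 f.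
move=> H; eapply H.
- by move=> u /=; case: ifP.
- by move=> u a b /=; case: ifP => _; rewrite ?addr0.
- have mf : map_poly psi md = md := md_fix d.
  move=> u c /=; rewrite -{1}mf (inj_eq mpi).
  by case: ifP => _; rewrite ?rmorph0.
Qed.

Lemma res_sigy_tr (f : FF k) (d : {poly k}) j :
  res_sigy (frac_map (map_poly psi) f) (ky_to_Ky d) j =
  map_poly psi (res_sigy f (ky_to_Ky d) j).
Proof.
rewrite /res_sigy; case: (j == 0%N); first by rewrite rmorph0.
set md := monicize (ky_to_Ky d).
have sf : forall l, map_poly psi (sigy_pow l md) = sigy_pow l md.
  by move=> l; rewrite map_sigy md_fix.
have := @res_transport k psi psi' c2
  (fun u c => let l := epsilon (inhabits 0%Z) (fun l : int => u = sigy_pow l md) in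
     if u == sigy_pow l md then sigy_pow (- l) c else 0) j.-1 f.
move=> H; simpl in H; apply: H.
- by move=> u /=; case: ifP => _ //; rewrite /sigy_pow comp_poly0.
- intros u a b; destruct (u == _); [exact: comp_polyD | by rewrite addr0].
- intros u c.
  have E : (fun l : int => map_poly psi u = sigy_pow l md) =
           (fun l : int => u = sigy_pow l md).
    apply: functional_extensionality => l; apply: propositional_extensionality.
    split; first by move=> h; apply: mpi; rewrite h sf.
    by move=> ->; rewrite sf.
  rewrite E; set l := epsilon _ _.
  rewrite -{1}(sf l) (inj_eq mpi).
  rewrite [in RHS]fun_if rmorph0 map_sigy; reflexivity.
Qed.

End Final.

Lemma comp_cancel (k : fieldType) (r r' : {poly k}) : r \Po r' = 'X ->
  cancel (comp_poly r) (comp_poly r').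
Proof. by move=> h p; rewrite -comp_polyA h comp_polyXr. Qed.

Lemma gen_data (k : fieldType) (r r' : {poly k}) :
  r \Po r' = 'X -> r' \Po r = 'X ->
  exists (psi psi' : {rmorphism KK k -> KK k}),
    [/\ cancel psi' psi, (forall c : k, psi ((c%:P)%:F) = (c%:P)%:F) &
        forall p, psi p = frac_map (comp_poly r) p].
Proof.
move=> h1 h2.
have i1 := can_inj (comp_cancel h1).
have i2 := can_inj (comp_cancel h2).
exists (fmR i1), (fmR i2); split.
- exact: fm_cancel i2 i1 (comp_cancel h2).
- by move=> c; rewrite fmR_tofrac /= comp_polyC.
- by [].
Qed.

Theorem lemma1 (k : fieldType) (hk : [pchar k] =i pred0) (q : k) (hq : q != 0)
  (a b : {poly {poly k}}) (hb : b != 0) (d : {poly k})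
  (hd : irreducible_poly d)
  (hdb : exists c : {poly {poly k}}, b = c * ky_to_kxy d) :
  let f := kxy_to_F a / kxy_to_F b in
  let dK := ky_to_Ky d in
  [/\ res_Dy (sigx f) dK = sigx_Ky (res_Dy f dK),
      res_Dy (taux q f) dK = taux_Ky q (res_Dy f dK) &
      forall j : nat, res_sigy (taux q f) dK j = taux_Ky q (res_sigy f dK j)].
Proof.
move=> f dK.
have h1 : ('X + 1) \Po ('X - 1) = 'X :> {poly k}.
  by rewrite comp_polyD comp_polyX -polyC1 comp_polyC subrK.
have h2 : ('X - 1) \Po ('X + 1) = 'X :> {poly k}.
  by rewrite comp_polyB comp_polyX -polyC1 comp_polyC addrK.
have h3 : (q *: 'X) \Po (q^-1 *: 'X) = 'X :> {poly k}.
  by rewrite comp_polyZ comp_polyX scalerA mulfV // scale1r.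
have h4 : (q^-1 *: 'X) \Po (q *: 'X) = 'X :> {poly k}.
  by rewrite comp_polyZ comp_polyX scalerA mulVf // scale1r.
have [ps [ps' [c2 hf E]]] := gen_data h1 h2.
have [pt [pt' [c2' hf' E']]] := gen_data h3 h4.
have Ex : forall p : {poly KK k}, sigx_Ky p = map_poly ps p.
  by move=> p; rewrite /sigx_Ky; apply: eq_map_poly => x; rewrite E.
have Sx : forall g, sigx g = frac_map (map_poly ps) g.
  by move=> g; rewrite /sigx /frac_map !Ex.
have Et : forall p : {poly KK k}, taux_Ky q p = map_poly pt p.
  by move=> p; rewrite /taux_Ky; apply: eq_map_poly => x; rewrite E'.
have St : forall g, taux q g = frac_map (map_poly pt) g.
  by move=> g; rewrite /taux /frac_map !Et.
split.
- by rewrite Sx Ex; exact: res_Dy_tr c2 hf f d.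
- by rewrite St Et; exact: res_Dy_tr c2' hf' f d.
- by move=> j; rewrite St Et; exact: res_sigy_tr c2' hf' f d j.
Qed.
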